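(* Let $\mathcal K$ be a compact subset of $\mathcal L_{\mathbb C}$. For $L\in\mathcal K$ let $\eta_L$ be the $2$-dimensional Hausdorff measure on the chain $L$ with respect to the restriction of the visual metric $d$. Then there is $C<\infty$ such that $\eta_L(B(x,r))\le Cr^2$ for all $L\in\mathcal K$, $x\in\mathbf S^3$ and $r>0$, where $B(x,r)$ is the visual ball.
   Context: On $\mathbb{C}^3$: $u\cdot v=\sum u_i\bar v_i$, $\|u\|=\sqrt{u\cdot u}$, $\langle u,v\rangle=u_0\bar v_0-u_1\bar v_1-u_2\bar v_2$, $q(u)=\langle u,u\rangle$. $\mathbf S^3=\{u\in\mathbb P^2_{\mathbb C}:q(u)=0\}$ with visual metric $d(u,v)=\sqrt{|\langle u,v\rangle|/(\|u\|\|v\|)}$. $\mathcal L_{\mathbb C}=\{w\in\mathbb P^2_{\mathbb C}:q(w)<0\}$, with metric $d_E(u,v)=\|u\wedge v\|/(\|u\|\|v\|)$, $\|u\wedge v\|^2=\|u\|^2\|v\|^2-|u\cdot v|^2$; $w\in\mathcal L_{\mathbb C}$ is identified with the chain $L_w=\{u\in\mathbf S^3:\langle u,w\rangle=0\}$. *)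

(* Defs.v *)
From HB Require Import structures.
From mathcomp Require Import all_boot all_order all_algebra.
From mathcomp Require Import all_classical all_reals all_analysis.
From mathcomp.real_closed Require Import complex.

Set Implicit Arguments.
Unset Strict Implicit.
Unset Printing Implicit Defensive.

Import Order.TTheory GRing.Theory Num.Theory.
Local Open Scope classical_set_scope.
Local Open Scope ring_scope.

Section Defs.
Variable R : realType.

Definition C3 := ((R[i] * R[i]) * R[i])%type.

Definition c0 (u : C3) : R[i] := u.1.1.
Definition c1 (u : C3) : R[i] := u.1.2.
Definition c2 (u : C3) : R[i] := u.2.

Definition zero3 : C3 := (0, 0, 0).

Definition cabs (z : R[i]) : R := Num.sqrt (complex.Re z ^+ 2 + complex.Im z ^+ 2).

Definition dot3 (u v : C3) : R[i] :=
  c0 u * conjc (c0 v) + c1 u * conjc (c1 v) + c2 u * conjc (c2 v).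

(* ||u|| = sqrt (u . u)  (u . u is real and nonnegative) *)
Definition norm3 (u : C3) : R := Num.sqrt (complex.Re (dot3 u u)).

Definition herm (u v : C3) : R[i] :=
  c0 u * conjc (c0 v) - c1 u * conjc (c1 v) - c2 u * conjc (c2 v).

(* q(u) = <u,u> (a real number) *)
Definition qf (u : C3) : R := complex.Re (herm u u).

(* Points of P^2_C are represented by nonzero vectors of C^3; all notions
   below are invariant under u |-> lambda u. *)

Definition S3 : set C3 := [set u | u <> zero3 /\ qf u = 0].

Definition LC : set C3 := [set w | w <> zero3 /\ qf w < 0].

Definition visual_d (u v : C3) : R :=
  Num.sqrt (cabs (herm u v) / (norm3 u * norm3 v)).

Definition visual_ball (x : C3) (r : R) : set C3 :=
  [set u | S3 u /\ visual_d x u < r].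

(* metric on L_C: d_E(u,v) = ||u /\ v|| / (||u|| ||v||),
   ||u /\ v||^2 = ||u||^2 ||v||^2 - |u . v|^2 *)
Definition wedge_norm (u v : C3) : R :=
  Num.sqrt (norm3 u ^+ 2 * norm3 v ^+ 2 - cabs (dot3 u v) ^+ 2).

Definition dE (u v : C3) : R := wedge_norm u v / (norm3 u * norm3 v).

Definition chain (w : C3) : set C3 := [set u | S3 u /\ herm u w = 0].

Definition dE_open (U : set C3) : Prop :=
  forall x, U x -> exists2 e : R, 0 < e & [set y | dE x y < e] `<=` U.

Definition dE_compact (K : set C3) : Prop :=
  forall (I : Type) (U : I -> set C3),
    (forall i, dE_open (U i)) -> K `<=` \bigcup_i U i ->
    exists2 J : set I, finite_set J & K `<=` \bigcup_(i in J) U i.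

End Defs.

Section Hausdorff.
Variables (R : realType) (T : Type) (dist : T -> T -> R).
Local Open Scope ereal_scope.

(* diameter of a set (diam of the empty set is 0) *)
Definition diam (E : set T) : \bar R :=
  ereal_sup ([set 0%E] `|` [set z | exists x y, E x /\ E y /\ z = (dist x y)%:E]).

Definition hausdorff_content (X : set T) (s : nat) (delta : R) (A : set T)
  : \bar R :=
  ereal_inf [set S | exists F : nat -> set T,
     [/\ (forall n, F n `<=` X), A `<=` \bigcup_n F n,
         (forall n, diam (F n) <= delta%:E) &
         S = \sum_(n <oo) (diam (F n)) ^+ s]].

(* s-dimensional Hausdorff measure H^s(A) = sup_{delta > 0} H^s_delta(A)
   (without normalization constant) *)
Definition hausdorff_measure (X : set T) (s : nat) (A : set T) : \bar R :=
  ereal_sup [set hausdorff_content X s delta A | delta in [set d : R | (0 < d)%R]].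

End Hausdorff.

Definition eta_chain (R : realType) (w : C3 R) (A : set (C3 R)) : \bar R :=
  hausdorff_measure (@visual_d R) (chain w) 2 (A `&` chain w).

(* Main.v *)
Require Import Defs.
From HB Require Import structures.
From mathcomp Require Import all_boot all_order all_algebra.
From mathcomp Require Import all_classical all_reals all_analysis.
From mathcomp.real_closed Require Import complex.
From mathcomp Require Import ring lra zify.
Import Order.TTheory GRing.Theory Num.Theory.
Local Open Scope classical_set_scope.
Local Open Scope ring_scope.
Local Open Scope complex_scope.
Set Implicit Arguments.
Unset Strict Implicit.
Section Haus.
Variables (R : realType) (T : Type) (dist : T -> T -> R).

Lemma sqrt_ub (d c : R) : 0 <= d -> d ^+ 2 <= c -> d <= Num.sqrt c.
Proof.
move=> d0 h; rewrite -(ger0_norm d0) -sqrtr_sqr; exact: ler_wsqrtr.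
Qed.

Lemma diam_le (E : set T) (c : R) : 0 <= c ->
  (forall x y, E x -> E y -> dist x y <= c) -> (diam dist E <= c%:E)%E.
Proof.
move=> c0 H; apply: ge_ereal_sup => z [-> | [x [y [Ex [Ey ->]]]]].
  by rewrite lee_fin.
by rewrite lee_fin; exact: H.
Qed.

Lemma diam_ge0 (E : set T) : (0 <= diam dist E)%E.
Proof. by apply: ereal_sup_ubound; left. Qed.

Lemma diam_sq_le (E : set T) (c : R) : 0 <= c ->
  (forall x y, E x -> E y -> dist x y <= c) -> (diam dist E ^+ 2 <= (c ^+ 2)%:E)%E.
Proof.
move=> c0 H; have := diam_le c0 H; have := diam_ge0 E.
case: (diam dist E) => [r| |] //.
rewrite !lee_fin => r0 rc /=; nra.
Qed.

Lemma haus_bound (X A : set T) (L M : R) (P : nat -> R -> T -> Prop) :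
  0 <= L -> 0 <= M -> A `<=` X ->
  (forall v, A v -> exists j, (j < 4)%N /\ exists b, -L <= b <= L /\ P j b v) ->
  (forall j b b' v v', P j b v -> P j b' v' -> A v -> A v' ->
     dist v v' ^+ 2 <= M * `|b - b'|) ->
  (forall v v', 0 <= dist v v') ->
  (hausdorff_measure dist X 2 A <= (8 * L * M)%:E)%E.
Proof.
move=> L0 M0 AX cov hol d0.
apply: ge_ereal_sup => _ [delta /= d_pos <-].
set N := (Num.truncn (2 * L * M / delta ^+ 2)).+1.
have N0 : (0 < N)%N by [].
have NR0 : (0 < N%:R :> R) by rewrite ltr0n.
have hN : 2 * L * M / delta ^+ 2 < N%:R.
  have := truncn_itv (x := 2 * L * M / delta ^+ 2).
  rewrite divr_ge0 ?mulr_ge0 ?sqr_ge0 ?ler0n // ?(ltW d_pos) // => /(_ isT) /andP[_].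
  by [].
set h := 2 * L / N%:R.
have h0 : 0 <= h by rewrite divr_ge0 ?mulr_ge0 // ler0n.
have hNe : h * N%:R = 2 * L by rewrite /h divfK // gt_eqF.
have Mh : M * h <= delta ^+ 2.
  have d2 : 0 < delta ^+ 2 by rewrite exprn_gt0.
  move: hN; rewrite ltr_pdivrMr // => hN.
  rewrite /h mulrA ler_pdivrMr //; nra.
set F := fun n : nat => [set v | A v /\ (n < 4 * N)%N /\ exists b,
   -L + h * (n %% N)%:R <= b <= -L + h * (n %% N).+1%:R /\ P (n %/ N)%N b v].
have Fd : forall n x y, F n x -> F n y -> dist x y <= Num.sqrt (M * h).
  move=> n x y [Ax [_ [bx [/andP[bx1 bx2] Px]]]] [Ay [_ [by' [/andP[by1 by2] Py]]]].
  apply: sqrt_ub => //; apply: le_trans (hol _ _ _ _ _ Px Py Ax Ay) _.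
  apply: ler_wpM2l => //.
  move: bx1 bx2 by1 by2; rewrite -natr1 => bx1 bx2 by1 by2.
  rewrite ler_norml; apply/andP; split; nra.
apply: ge_ereal_inf; exists (\sum_(n <oo) diam dist (F n) ^+ 2)%E.
  exists F; split => //.
  - by move=> n v [Av _]; exact: AX.
  - move=> v Av; case: (cov v Av) => j [hj [b [/andP[b1 b2] Pb]]].
    have [i [hi [i1 i2]]] : exists i, (i < N)%N /\ -L + h * i%:R <= b /\
                                  b <= -L + h * i.+1%:R.
      have [h00|hpos] := eqVneq h 0.
        have L00 : L = 0.
          have : 2 * L = 0 by rewrite -hNe h00 mul0r.
          lra.
        exists 0%N; split => //; rewrite h00 !mul0r L00; lra.
      have hp : 0 < h by rewrite lt_def hpos h0.
      set t := (b + L) / h.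
      have t0 : 0 <= t by rewrite /t divr_ge0 //; lra.
      have tN : t <= N%:R.
        rewrite /t ler_pdivrMr // [N%:R * h]mulrC hNe; lra.
      have /andP[tr1 tr2] := truncn_itv t0.
      have [lt|ge] := ltnP (Num.truncn t) N.
        exists (Num.truncn t); split => //.
        move: tr1 tr2; rewrite /t ler_pdivlMr // ltr_pdivrMr // => tr1 tr2.
        split; nra.
      exists N.-1; split; first by rewrite prednK // leqnn.
      have tNe : t = N%:R.
        apply/eqP; rewrite eq_le tN /=; apply: le_trans tr1; by rewrite ler_nat.
      move: tNe; rewrite /t => /(congr1 (fun z => z * h)); rewrite divfK ?gt_eqF // => e.
      rewrite prednK //; split; last by nra.
      rewrite -natr1 in e |- *. nra.
    exists (j * N + i)%N => //; split => //.
    have em : ((j * N + i) %% N = i)%N by rewrite modnMDl modn_small.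
    have ed : ((j * N + i) %/ N = j)%N by rewrite divnMDl // divn_small // addn0.
    split; first by nia.
    exists b; rewrite em ed; split => //; apply/andP; split => //.
  - move=> n; apply: diam_le; first exact: ltW d_pos.
    move=> x y Fx Fy; apply: le_trans (Fd _ _ _ Fx Fy) _.
    rewrite -(ger0_norm (ltW d_pos)) -sqrtr_sqr; exact: ler_wsqrtr.
rewrite (nneseries_split 0 (4 * N)); last by move=> k _; exact: sqre_ge0.
rewrite (@eseries0 _ _ (0 + 4 * N)%N xpredT) ?adde0; last first.
  move=> k hk _; apply/eqP; rewrite eq_le sqre_ge0 andbT.
  have -> : (0 = ((0 : R) ^+ 2)%:E)%E by rewrite expr0n.
  apply: diam_sq_le => // x y [_ [hx _]]; lia.
apply: (@le_trans _ _ (\sum_(0 <= k < 0 + 4 * N) (M * h)%:E)%E).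
  apply: lee_sum => k _; rewrite -(@sqr_sqrtr _ (M * h)) ?mulr_ge0 //.
  apply: diam_sq_le; [exact: sqrtr_ge0 | exact: Fd].
rewrite sumEFin lee_fin sumr_const_nat add0n subn0 -[_ *+ _]mulr_natr natrM.
have -> : M * h * (4%:R * N%:R) = M * (h * N%:R) * 4 by ring.
rewrite hNe; lra.
Qed.
End Haus.

Notation CRe := complex.Re.
Notation CIm := complex.Im.
Section Cplx.
Variable R : realType.
Implicit Types x y z : R[i].
Lemma ReM x y : CRe (x * y) = CRe x * CRe y - CIm x * CIm y.
Proof. by case: x => a b; case: y => c d. Qed.
Lemma ImM x y : CIm (x * y) = CRe x * CIm y + CIm x * CRe y.
Proof. by case: x => a b; case: y => c d. Qed.
Lemma ReD x y : CRe (x + y) = CRe x + CRe y.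
Proof. by case: x => a b; case: y => c d. Qed.
Lemma ImD x y : CIm (x + y) = CIm x + CIm y.
Proof. by case: x => a b; case: y => c d. Qed.
Lemma ReN x : CRe (- x) = - CRe x. Proof. by case: x. Qed.
Lemma ImN x : CIm (- x) = - CIm x. Proof. by case: x. Qed.
Lemma ReB x y : CRe (x - y) = CRe x - CRe y.
Proof. by case: x => a b; case: y => c d. Qed.
Lemma ImB x y : CIm (x - y) = CIm x - CIm y.
Proof. by case: x => a b; case: y => c d. Qed.
Lemma ReJ x : CRe (x^*)%C = CRe x. Proof. by case: x. Qed.
Lemma ImJ x : CIm (x^*)%C = - CIm x. Proof. by case: x. Qed.
Lemma ReC (a : R) : CRe (a%:C)%C = a. Proof. by []. Qed.
Lemma ImC (a : R) : CIm (a%:C)%C = 0. Proof. by []. Qed.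
Lemma Re1 : CRe (1 : R[i]) = 1. Proof. by []. Qed.
Lemma Im1 : CIm (1 : R[i]) = 0. Proof. by []. Qed.
Lemma Re0 : CRe (0 : R[i]) = 0. Proof. by []. Qed.
Lemma Im0 : CIm (0 : R[i]) = 0. Proof. by []. Qed.
Lemma Rei : CRe ('i : R[i])%C = 0. Proof. by []. Qed.
Lemma Imi : CIm ('i : R[i])%C = 1. Proof. by []. Qed.
Lemma ReX a b : CRe (a +i* b)%C = a :> R. Proof. by []. Qed.
Lemma ImX a b : CIm (a +i* b)%C = b :> R. Proof. by []. Qed.
Definition CE := (ReM, ImM, ReD, ImD, ReN, ImN, ReB, ImB, ReJ, ImJ, ReC, ImC,
  Re1, Im1, Re0, Im0, Rei, Imi, ReX, ImX).
Lemma cplx_eq x y : CRe x = CRe y -> CIm x = CIm y -> x = y.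
Proof. by case: x => a b; case: y => c d /= -> ->. Qed.

Definition sq z : R := CRe z ^+ 2 + CIm z ^+ 2.
Lemma sq_ge0 z : 0 <= sq z. Proof. by rewrite /sq addr_ge0 ?sqr_ge0. Qed.
Lemma cabs_sqE z : cabs z = Num.sqrt (sq z). Proof. by []. Qed.
Lemma cabs_ge0 z : 0 <= cabs z. Proof. exact: sqrtr_ge0. Qed.
Lemma cabs_sq z : cabs z ^+ 2 = sq z. Proof. by rewrite sqr_sqrtr // sq_ge0. Qed.
Lemma cabs_normc z : cabs z = Normc.normc z. Proof. by case: z. Qed.
Lemma cabsM x y : cabs (x * y) = cabs x * cabs y.
Proof. by rewrite !cabs_normc Normc.normcM. Qed.
Lemma cabsD x y : cabs (x + y) <= cabs x + cabs y.
Proof. by rewrite !cabs_normc le_normcD. Qed.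
Lemma cabsJ x : cabs (x^*)%C = cabs x.
Proof. by rewrite /cabs ReJ ImJ sqrrN. Qed.
Lemma cabsN x : cabs (- x) = cabs x.
Proof. by rewrite /cabs ReN ImN !sqrrN. Qed.
Lemma cabsB x y : cabs (x - y) = cabs (y - x).
Proof. by rewrite -cabsN opprB. Qed.
Lemma cabsC (a : R) : cabs (a%:C)%C = `|a|.
Proof. by rewrite /cabs ReC ImC expr0n addr0 sqrtr_sqr. Qed.
Lemma cabsV x : cabs (x^-1) = (cabs x)^-1.
Proof. by rewrite !cabs_normc Normc.normcV. Qed.
Lemma cabs_eq0 x : cabs x = 0 -> x = 0.
Proof. by rewrite cabs_normc => /Normc.eq0_normc. Qed.
Lemma cabs_neq0 x : x != 0 -> 0 < cabs x.
Proof.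
move=> x0; rewrite lt_def cabs_ge0 andbT; apply/eqP => /cabs_eq0 h.
by rewrite h eqxx in x0.
Qed.
Lemma sq_eq0 x : sq x = 0 -> x = 0.
Proof. by move=> h; apply: cabs_eq0; rewrite cabs_sqE h sqrtr0. Qed.
Lemma cabs_rev x y : cabs x - cabs y <= cabs (x - y).
Proof.
have := cabsD (x - y) y; rewrite subrK; lra.
Qed.
Lemma mulJ x : x * x^*%C = (sq x)%:C.
Proof. by apply: cplx_eq; rewrite /sq !CE; ring. Qed.
End Cplx.
Section Vec.
Variable R : realType.
Implicit Types (u v w x : C3 R) (l m z : R[i]).

Definition scv l u : C3 R := (l * c0 u, l * c1 u, l * c2 u).

Lemma herm_sc l m u v : herm (scv l u) (scv m v) = l * m^* * herm u v.
Proof. rewrite /herm /scv /c0 /c1 /c2 /= !rmorphM /=; ring. Qed.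

Lemma norm3_sc l u : norm3 (scv l u) = cabs l * norm3 u.
Proof.
rewrite /norm3 cabs_sqE -sqrtrM ?sq_ge0 //; congr Num.sqrt.
rewrite /dot3 /sq /scv /c0 /c1 /c2 /= !CE; ring.
Qed.

Lemma visual_d_sc l m u v : l != 0 -> m != 0 ->
  visual_d (scv l u) (scv m v) = visual_d u v.
Proof.
move=> l0 m0; rewrite /visual_d herm_sc !cabsM cabsJ !norm3_sc.
have cl := cabs_neq0 l0; have cm := cabs_neq0 m0.
have -> : cabs l * norm3 u * (cabs m * norm3 v) =
   (cabs l * cabs m) * (norm3 u * norm3 v) by ring.
rewrite invfM mulrACA mulfV ?mul1r //.
by rewrite mulf_neq0 // gt_eqF.
Qed.

Lemma qfE u : qf u = sq (c0 u) - sq (c1 u) - sq (c2 u).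
Proof. rewrite /qf /herm /sq !CE; ring. Qed.

Lemma dotE u : CRe (dot3 u u) = sq (c0 u) + sq (c1 u) + sq (c2 u).
Proof. rewrite /dot3 /sq !CE; ring. Qed.

Definition nw w : R := sq (c1 w) + sq (c2 w).
Definition kw w : R := Num.sqrt (nw w - sq (c0 w)).
Definition U' w (k : R) z : C3 R :=
  ((nw w)%:C, (c0 w)^* * c1 w - k%:C * z * (c2 w)^*,
              (c0 w)^* * c2 w + k%:C * z * (c1 w)^*).
Definition U w z := U' w (kw w) z.

Lemma dotU_id w k z : CRe (dot3 (U' w k z) (U' w k z)) =
  nw w ^+ 2 + sq (c0 w) * nw w + k ^+ 2 * sq z * nw w.
Proof. rewrite /dot3 /U' /nw /sq /c0 /c1 /c2 /= !CE; ring. Qed.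

Lemma hermU_id w k z z' : herm (U' w k z) (U' w k z') =
  (nw w * (nw w - sq (c0 w)))%:C - (k ^+ 2 * nw w)%:C * (z * z'^*).
Proof.
apply: cplx_eq; rewrite /herm /U' /nw /sq /c0 /c1 /c2 /= !CE; ring.
Qed.

Lemma hermxU_id x w k z : herm x (U' w k z) =
  (nw w)%:C * c0 x - c0 w * (c1 x * (c1 w)^* + c2 x * (c2 w)^*)
  - z^* * (k%:C * (c2 x * c1 w - c1 x * c2 w)).
Proof.
apply: cplx_eq; rewrite /herm /U' /nw /sq /c0 /c1 /c2 /= !CE; ring.
Qed.
End Vec.
Section Chain.
Variable R : realType.
Implicit Types (u v w x : C3 R) (l m z : R[i]).

Lemma Ceq0 (a : R) : (a%:C == 0 :> R[i]) = (a == 0).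
Proof. by apply/eqP/eqP => [[]|->]. Qed.

Lemma LC_pos w : LC w -> 0 < nw w - sq (c0 w).
Proof. by case=> _; rewrite qfE /nw; lra. Qed.
Lemma kw_sq w : LC w -> kw w ^+ 2 = nw w - sq (c0 w).
Proof. by move=> /LC_pos h; rewrite sqr_sqrtr // ltW. Qed.
Lemma kw_gt0 w : LC w -> 0 < kw w.
Proof. by move=> /LC_pos h; rewrite sqrtr_gt0. Qed.
Lemma nw_gt0 w : LC w -> 0 < nw w.
Proof. by move=> /LC_pos h; have := sq_ge0 (c0 w); lra. Qed.

Lemma norm3_U w z : LC w -> sq z = 1 -> norm3 (U w z) = Num.sqrt 2 * nw w.
Proof.
move=> hw hz; rewrite /norm3 /U dotU_id hz kw_sq //.
have -> : nw w ^+ 2 + sq (c0 w) * nw w + (nw w - sq (c0 w)) * 1 * nw w =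
  2 * nw w ^+ 2 by ring.
by rewrite sqrtrM ?ler0n // sqrtr_sqr ger0_norm // ltW // nw_gt0.
Qed.

Lemma hermU w z z' : LC w ->
  herm (U w z) (U w z') = (nw w * kw w ^+ 2)%:C * (1 - z * z'^*).
Proof.
move=> hw; rewrite /U hermU_id -(kw_sq hw) [kw w ^+ 2 * _]mulrC; ring.
Qed.

Lemma chain_param w v : LC w -> chain w v ->
  exists l z, [/\ l != 0, sq z = 1 & v = scv l (U w z)].
Proof.
move=> hw; case: v => [[v0 v1] v2] [[nz qv] hv].
have n0 := nw_gt0 hw; have k0 := kw_gt0 hw; have ksq := kw_sq hw.
rewrite qfE /c0 /c1 /c2 /= in qv.
have hH : v0 * (c0 w)^* = v1 * (c1 w)^* + v2 * (c2 w)^* + herm (v0, v1, v2) w.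
  by rewrite /herm /c0 /c1 /c2 /=; ring.
rewrite hv addr0 in hH.
have v00 : v0 != 0.
  apply/eqP => e; apply: nz; rewrite e in qv.
  have s0 : sq (0 : R[i]) = 0 by rewrite /sq !CE expr0n addr0.
  have := sq_ge0 v1; have := sq_ge0 v2 => h2 h1.
  have e1 : sq v1 = 0 by lra.
  have e2 : sq v2 = 0 by lra.
  by rewrite e (sq_eq0 e1) (sq_eq0 e2).
have nC0 : (nw w)%:C != 0 :> R[i] by rewrite Ceq0 gt_eqF.
have kC0 : (kw w)%:C != 0 :> R[i] by rewrite Ceq0 gt_eqF.
set X := v2 * c1 w - v1 * c2 w.
exists (v0 / (nw w)%:C), (X / (v0 * (kw w)%:C)); split.
- by rewrite mulf_neq0 // invr_neq0.
- have sqX : sq X = sq v0 * kw w ^+ 2.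
    have lag : sq (v1 * (c1 w)^* + v2 * (c2 w)^*) + sq X =
       (sq v1 + sq v2) * nw w by rewrite /X /nw /sq !CE; ring.
    have : sq (v0 * (c0 w)^*) = sq v0 * sq (c0 w) by rewrite /sq !CE; ring.
    rewrite hH => e; rewrite ksq; rewrite e in lag.
    have qv' : sq v1 + sq v2 = sq v0 by lra.
    rewrite qv' in lag; rewrite mulrBr; lra.
  have cX : cabs X = cabs v0 * kw w.
    by rewrite cabs_sqE sqX sqrtrM ?sq_ge0 // sqrtr_sqr ger0_norm ?ltW.
  rewrite -cabs_sq cabsM cabsV cabsM cabsC cX ger0_norm ?ltW // mulfV ?expr1n //.
  by rewrite mulf_neq0 // gt_eqF // cabs_neq0.
- have nC : (nw w)%:C = c1 w * (c1 w)^* + c2 w * (c2 w)^* :> R[i].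
    by rewrite !mulJ /nw rmorphD.
  have e0 : v0 = v0 / (nw w)%:C * (nw w)%:C by rewrite divfK.
  have e1 : v1 = v0 / (nw w)%:C * ((c0 w)^* * c1 w - (kw w)%:C * (X / (v0 * (kw w)%:C)) * (c2 w)^*).
    have -> : v0 / (nw w)%:C * ((c0 w)^* * c1 w - (kw w)%:C * (X / (v0 * (kw w)%:C)) * (c2 w)^*)
       = (v0 * (c0 w)^* * c1 w - X * (c2 w)^*) / (nw w)%:C.
      by field; rewrite nC0 kC0 v00.
    rewrite hH -{1}(mulfK nC0 v1); congr (_ / _); rewrite nC /X; ring.
  have e2 : v2 = v0 / (nw w)%:C * ((c0 w)^* * c2 w + (kw w)%:C * (X / (v0 * (kw w)%:C)) * (c1 w)^*).
    have -> : v0 / (nw w)%:C * ((c0 w)^* * c2 w + (kw w)%:C * (X / (v0 * (kw w)%:C)) * (c1 w)^*)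
       = (v0 * (c0 w)^* * c2 w + X * (c1 w)^*) / (nw w)%:C.
      by field; rewrite nC0 kC0 v00.
    rewrite hH -{1}(mulfK nC0 v2); congr (_ / _); rewrite nC /X; ring.
  by rewrite [in LHS]e0 [in LHS]e1 [in LHS]e2.
Qed.
End Chain.
Section Dist.
Variable R : realType.
Implicit Types (u v w x : C3 R) (l m z : R[i]).

Lemma cabs_unit z : sq z = 1 -> cabs z = 1.
Proof. by move=> h; rewrite cabs_sqE h sqrtr1. Qed.

Lemma norm3_ge0 u : 0 <= norm3 u. Proof. exact: sqrtr_ge0. Qed.

Lemma vd_chain w l m z z' : LC w -> l != 0 -> m != 0 -> sq z = 1 -> sq z' = 1 ->
  visual_d (scv l (U w z)) (scv m (U w z')) ^+ 2 =
  kw w ^+ 2 * cabs (z - z') / (2 * nw w).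
Proof.
move=> hw l0 m0 hz hz'; rewrite visual_d_sc // /visual_d sqr_sqrtr; last first.
  by rewrite divr_ge0 ?cabs_ge0 // mulr_ge0 // norm3_ge0.
rewrite hermU // !norm3_U // cabsM cabsC.
have -> : 1 - z * z'^* = (z' - z) * z'^*.
  by rewrite mulrBl mulJ hz'; ring.
rewrite cabsM cabsJ (cabs_unit hz') mulr1 cabsB.
have n0 := nw_gt0 hw.
have s2 : Num.sqrt 2 ^+ 2 = 2 :> R by rewrite sqr_sqrtr // ler0n.
rewrite ger0_norm; last by rewrite mulr_ge0 // ?sqr_ge0 // ltW.
have -> : Num.sqrt 2 * nw w * (Num.sqrt 2 * nw w) = Num.sqrt 2 ^+ 2 * nw w ^+ 2 by ring.
rewrite s2; field; rewrite gt_eqF //.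
Qed.

Lemma scv1 u : scv 1 u = u.
Proof. by case: u => [[a b] c]; rewrite /scv /c0 /c1 /c2 /= !mul1r. Qed.

Lemma visual_d_scr u m v : m != 0 -> visual_d u (scv m v) = visual_d u v.
Proof. by move=> m0; rewrite -{1}(scv1 u) visual_d_sc // oner_neq0. Qed.

Lemma S3_x0 x : S3 x -> 0 < cabs (c0 x) /\ sq (c1 x) + sq (c2 x) = sq (c0 x).
Proof.
case: x => [[x0 x1] x2] [nz]; rewrite qfE /c0 /c1 /c2 /= => qx.
split; last by lra.
apply: cabs_neq0; apply/eqP => e; apply: nz; rewrite e in qx.
have s0 : sq (0 : R[i]) = 0 by rewrite /sq !CE expr0n addr0.
have := sq_ge0 x1; have := sq_ge0 x2 => h2 h1.
have e1 : sq x1 = 0 by lra.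
have e2 : sq x2 = 0 by lra.
by rewrite e (sq_eq0 e1) (sq_eq0 e2).
Qed.

Lemma norm3_S3 x : S3 x -> norm3 x = Num.sqrt 2 * cabs (c0 x).
Proof.
move=> /S3_x0 [_ h]; rewrite /norm3 dotE -addrA h.
by rewrite cabs_sqE -sqrtrM ?ler0n //; congr Num.sqrt; ring.
Qed.

Definition Ax w x : R[i] := (nw w)%:C * c0 x - c0 w * (c1 x * (c1 w)^* + c2 x * (c2 w)^*).
Definition bx w x : R[i] := c2 x * c1 w - c1 x * c2 w.

Lemma ball_cond w x l z r : LC w -> S3 x -> l != 0 -> sq z = 1 -> 0 < r ->
  visual_d x (scv l (U w z)) < r ->
  cabs (Ax w x - z^* * ((kw w)%:C * bx w x)) < 2 * r ^+ 2 * cabs (c0 x) * nw w.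
Proof.
move=> hw hx l0 hz r0; rewrite visual_d_scr // /visual_d.
have n0 := nw_gt0 hw; have [X0 _] := S3_x0 hx.
rewrite norm3_S3 // norm3_U // /U hermxU_id -/(Ax w x) -/(bx w x).
set a := cabs _ => h.
have a0 : 0 <= a by exact: cabs_ge0.
have s2 : Num.sqrt 2 ^+ 2 = 2 :> R by rewrite sqr_sqrtr // ler0n.
have D : Num.sqrt 2 * cabs (c0 x) * (Num.sqrt 2 * nw w) = 2 * cabs (c0 x) * nw w.
  transitivity (Num.sqrt 2 ^+ 2 * (cabs (c0 x) * nw w)); first by ring.
  by rewrite s2; ring.
rewrite D in h.
have Dp : 0 < 2 * cabs (c0 x) * nw w by rewrite !mulr_gt0.
have q0 : 0 <= a / (2 * cabs (c0 x) * nw w) by rewrite divr_ge0 // ltW.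
have : a / (2 * cabs (c0 x) * nw w) < r ^+ 2.
  rewrite -(sqr_sqrtr q0); rewrite ltr_pXn2r ?nnegrE ?sqrtr_ge0 // ltW //.
rewrite ltr_pdivrMr // => h2.
have -> : 2 * r ^+ 2 * cabs (c0 x) * nw w = r ^+ 2 * (2 * cabs (c0 x) * nw w) by ring.
exact: h2.
Qed.
End Dist.
Section Chart.
Variable R : realType.
Implicit Types (z : R[i]) (b : R).

Definition gam b : R[i] := (Num.sqrt (1 - b ^+ 2)) +i* b.

Lemma sq_gam b : b ^+ 2 <= 1 -> sq (gam b) = 1.
Proof. by move=> h; rewrite /sq /gam /= sqr_sqrtr; [ring | lra]. Qed.

Lemma sqrt_le (y c : R) : 0 <= c -> y <= c ^+ 2 -> Num.sqrt y <= c.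
Proof. by move=> c0 h; rewrite -(ger0_norm c0) -sqrtr_sqr; exact: ler_wsqrtr. Qed.

Lemma gam_lip b b' : `|b| <= 4/5 -> `|b'| <= 4/5 ->
  cabs (gam b - gam b') <= 3 * `|b - b'|.
Proof.
move=> hb hb'.
have hb2 : b ^+ 2 <= 16/25.
  by rewrite -real_normK ?num_real //; have := normr_ge0 b; nra.
have hb2' : b' ^+ 2 <= 16/25.
  by rewrite -real_normK ?num_real //; have := normr_ge0 b'; nra.
set a := Num.sqrt (1 - b ^+ 2); set a' := Num.sqrt (1 - b' ^+ 2).
have ea : a ^+ 2 = 1 - b ^+ 2 by rewrite sqr_sqrtr //; lra.
have ea' : a' ^+ 2 = 1 - b' ^+ 2 by rewrite sqr_sqrtr //; lra.
have a0 : 0 <= a := sqrtr_ge0 _. have a0' : 0 <= a' := sqrtr_ge0 _.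
have a35 : 3/5 <= a by nra.
have a35' : 3/5 <= a' by nra.
rewrite cabs_sqE /sq /gam !CE -/a -/a'.
apply: sqrt_le; first by rewrite mulr_ge0.
rewrite exprMn real_normK ?num_real //.
set d := a - a'; set e := b - b'.
have de : d * (a + a') = - e * (b + b') by rewrite /d /e; nra.
have bb : (b + b') ^+ 2 <= 64/25.
  have : (b + b') ^+ 2 <= 2 * (b ^+ 2 + b' ^+ 2) by have := sqr_ge0 e; rewrite /e; nra.
  lra.
have d2 : d ^+ 2 * (a + a') ^+ 2 <= e ^+ 2 * (64/25).
  have -> : d ^+ 2 * (a + a') ^+ 2 = e ^+ 2 * (b + b') ^+ 2.
    by rewrite -exprMn de; ring.
  by apply: ler_wpM2l; [exact: sqr_ge0 | exact: bb].
have aa : 36/25 <= (a + a') ^+ 2 by nra.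
have : d ^+ 2 * (36/25) <= e ^+ 2 * (64/25).
  apply: le_trans d2; apply: ler_wpM2l; [exact: sqr_ge0 | exact: aa].
have := sqr_ge0 e; nra.
Qed.

Definition cdir (j : nat) : R[i] :=
  match j with O => 1 | S O => 'i | S (S O) => -1 | _ => - 'i end.

Lemma sq_cdir j : sq (cdir j) = 1.
Proof.
by case: j => [|[|[|j]]]; rewrite /sq /cdir /= ?CE; ring.
Qed.

Lemma sqrt_sqr_pos (a : R) : 0 <= a -> Num.sqrt (a ^+ 2) = a.
Proof. by move=> a0; rewrite sqrtr_sqr ger0_norm. Qed.

Lemma circle_chart z : sq z = 1 ->
  exists j, (j < 4)%N /\ exists b, - (4/5) <= b <= 4/5 /\ z = cdir j * gam b.
Proof.
rewrite /sq; case: z => x y /= hz.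
have [hx|hx] := lerP (3/5) x.
  exists 0%N; split => //; exists y; split; first by apply/andP; split; nra.
  have e : Num.sqrt (1 - y ^+ 2) = x by rewrite (_ : 1 - y ^+ 2 = x ^+ 2) ?sqrt_sqr_pos; lra.
  by apply: cplx_eq; rewrite /cdir /gam e ?CE; ring.
have [hx'|hx'] := lerP x (- (3/5)).
  exists 2%N; split => //; exists (- y); split; first by apply/andP; split; nra.
  have e : Num.sqrt (1 - (- y) ^+ 2) = - x.
    by rewrite (_ : 1 - (- y) ^+ 2 = (- x) ^+ 2) ?sqrt_sqr_pos; lra.
  apply: cplx_eq; rewrite /cdir /gam e ?CE -/(- x) -/(- y); ring.
have [hy|hy] := lerP (3/5) y.
  exists 1%N; split => //; exists (- x); split; first by apply/andP; split; nra.
  have e : Num.sqrt (1 - (- x) ^+ 2) = y.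
    by rewrite (_ : 1 - (- x) ^+ 2 = y ^+ 2) ?sqrt_sqr_pos; lra.
  by apply: cplx_eq; rewrite /cdir /gam e ?CE; ring.
have [hy'|hy'] := lerP y (- (3/5)).
  exists 3%N; split => //; exists x; split; first by apply/andP; split; nra.
  have e : Num.sqrt (1 - x ^+ 2) = - y.
    by rewrite (_ : 1 - x ^+ 2 = (- y) ^+ 2) ?sqrt_sqr_pos; lra.
  by apply: cplx_eq; rewrite /cdir /gam e ?CE -/(- y) -/(0 : R); ring.
exfalso; nra.
Qed.

Lemma local_chart z1 z (D : R) : sq z1 = 1 -> sq z = 1 -> cabs (z - z1) <= D ->
  D <= 4/5 -> exists b, - D <= b <= D /\ z = z1 * gam b.
Proof.
move=> h1 h hD D45.
set t := z * z1^*.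
have zt : z = z1 * t by rewrite /t mulrCA mulJ h1 mulr1.
have ht : sq t = 1 by rewrite /t -cabs_sq cabsM cabsJ !cabs_unit // mulr1 expr1n.
have ct : cabs (t - 1) <= D.
  have e1 : z1 * z1^* = 1 by rewrite mulJ h1.
  have -> : t - 1 = (z - z1) * z1^* by rewrite /t mulrBl e1.
  by rewrite cabsM cabsJ (cabs_unit h1) mulr1.
have c0 := cabs_ge0 (t - 1).
have st : sq (t - 1) <= D ^+ 2 by rewrite -cabs_sq; nra.
have D0 : 0 <= D by lra.
clearbody t.
move: ht st; rewrite /sq ReB ImB Re1 Im1 subr0 => ht st.
have hy : CIm t ^+ 2 <= D ^+ 2 by nra.
exists (CIm t); split; first by apply/andP; split; nra.
rewrite zt; congr (_ * _).
have e : Num.sqrt (1 - CIm t ^+ 2) = CRe t.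
  by rewrite (_ : 1 - CIm t ^+ 2 = CRe t ^+ 2) ?sqrt_sqr_pos; nra.
by apply: cplx_eq; rewrite /gam e ?CE.
Qed.
End Chart.

Section Main.
Variable R : realType.
Implicit Types (u v w x : C3 R) (l m z : R[i]).

Lemma sqM z z' : sq (z * z') = sq z * sq z'.
Proof. by rewrite /sq !CE; ring. Qed.

Lemma sq_le1 (b L : R) : - L <= b <= L -> L <= 4/5 -> `|b| <= 4/5 /\ b ^+ 2 <= 1.
Proof.
move=> /andP[h1 h2] hL.
have nb : `|b| <= 4/5 by rewrite ler_norml; apply/andP; split; lra.
split => //.
rewrite -real_normK ?num_real //; have := normr_ge0 b; nra.
Qed.

Lemma chart_bound w (A : set (C3 R)) (c : nat -> R[i]) (L : R) :
  LC w -> A `<=` chain w -> (forall j, sq (c j) = 1) -> 0 <= L -> L <= 4/5 ->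
  (forall v, A v -> exists j, (j < 4)%N /\ exists b, - L <= b <= L /\
      exists l, l != 0 /\ v = scv l (U w (c j * gam b))) ->
  (hausdorff_measure (@visual_d R) (chain w) 2 A <=
     (8 * L * (3 * kw w ^+ 2 / (2 * nw w)))%:E)%E.
Proof.
move=> hw AX hc L0 L45 cov.
have n0 := nw_gt0 hw.
have q0 : 0 <= kw w ^+ 2 / (2 * nw w).
  by rewrite divr_ge0 ?sqr_ge0 // mulr_ge0 // ltW.
have -> : 8 * L * (3 * kw w ^+ 2 / (2 * nw w)) =
   8 * L * (3 * (kw w ^+ 2 / (2 * nw w))) by rewrite !mulrA.
apply: (haus_bound (P := fun j b v => - L <= b <= L /\
   exists l, l != 0 /\ v = scv l (U w (c j * gam b)))) => //.
- by rewrite mulr_ge0 // ler0n.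
- move=> v /cov [j [hj [b [hb Pb]]]]; exists j; split => //; exists b.
  by split => //; split.
- move=> j b b' v v' [hb [l [l0 ->]]] [hb' [m [m0 ->]]] _ _.
  have [nb sb] := sq_le1 hb L45.
  have [nb' sb'] := sq_le1 hb' L45.
  have s1 : sq (c j * gam b) = 1 by rewrite sqM hc sq_gam // mul1r.
  have s2 : sq (c j * gam b') = 1 by rewrite sqM hc sq_gam // mul1r.
  rewrite (vd_chain hw l0 m0 s1 s2).
  rewrite -mulrBr cabsM (cabs_unit (hc j)) mul1r.
  have hg := gam_lip nb nb'.
  have -> : kw w ^+ 2 * cabs (gam b - gam b') / (2 * nw w) =
    (kw w ^+ 2 / (2 * nw w)) * cabs (gam b - gam b') by rewrite mulrAC.
  rewrite [X in _ <= X]mulrAC [X in _ <= X]mulrC.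
  exact: ler_wpM2l.
- move=> v v'; exact: sqrtr_ge0.
Qed.
End Main.

Section Main2.
Variable R : realType.
Implicit Types (u v w x : C3 R) (l m z : R[i]).

Lemma lag_x w x : sq (c1 x * (c1 w)^* + c2 x * (c2 w)^*) + sq (bx w x) =
  (sq (c1 x) + sq (c2 x)) * nw w.
Proof. rewrite /bx /nw /sq !CE; ring. Qed.

Lemma cabs_x_C (a : R) z : 0 <= a -> cabs (a%:C * z) = a * cabs z.
Proof. by move=> a0; rewrite cabsM cabsC ger0_norm. Qed.

Lemma key_bx w x z1 r : LC w -> S3 x -> 0 < r -> 64 * r ^+ 2 * nw w < kw w ^+ 2 ->
  sq z1 = 1 ->
  cabs (Ax w x - z1^* * ((kw w)%:C * bx w x)) < 2 * r ^+ 2 * cabs (c0 x) * nw w ->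
  kw w * cabs (c0 x) / 12 <= cabs (bx w x).
Proof.
move=> hw hx r0 big hz1 hball.
have n0 := nw_gt0 hw; have k0 := kw_gt0 hw; have ksq := kw_sq hw.
have [X0 hx12] := S3_x0 hx.
set X := cabs (c0 x) in X0 hball *.
set bb := cabs (bx w x).
set a' := c1 x * (c1 w)^* + c2 x * (c2 w)^*.
rewrite leNgt; apply/negP => hlt.
have bb0 : 0 <= bb := cabs_ge0 _.
have cA1 : cabs (Ax w x) < 2 * r ^+ 2 * X * nw w + kw w * bb.
  have t1 := cabsD (Ax w x - z1^* * ((kw w)%:C * bx w x)) (z1^* * ((kw w)%:C * bx w x)).
  rewrite subrK in t1.
  have t2 : cabs (z1^* * ((kw w)%:C * bx w x)) = kw w * bb.
    by rewrite cabsM cabsJ (cabs_unit hz1) mul1r cabs_x_C // ltW.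
  lra.
have cA2 : nw w * X - cabs (c0 w) * cabs a' <= cabs (Ax w x).
  have := cabs_rev ((nw w)%:C * c0 x) (c0 w * a').
  by rewrite (cabs_x_C (c0 x) (ltW n0)) (cabsM (c0 w) a').
have ca : cabs a' <= X * Num.sqrt (nw w).
  apply: sqrt_le; first by rewrite mulr_ge0 ?sqrtr_ge0 // ltW.
  change (sq a' <= (X * Num.sqrt (nw w)) ^+ 2).
  rewrite exprMn (sqr_sqrtr (ltW n0)) (cabs_sq (c0 x)) -hx12.
  have := lag_x w x; rewrite -/a' => e.
  have := sq_ge0 (bx w x); nra.
set m' := cabs (c0 w) in cA2 *.
set s := Num.sqrt (nw w) in ca *.
have m0 : 0 <= m' := cabs_ge0 _.
have s0 : 0 <= s := sqrtr_ge0 _.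
have ss : s ^+ 2 = nw w by rewrite sqr_sqrtr // ltW.
have mm : m' ^+ 2 = nw w - kw w ^+ 2 by rewrite /m' cabs_sq ksq; ring.
have h0 : kw w ^+ 2 / 2 <= nw w - m' * s.
  have := sqr_ge0 (s - m'); nra.
have h1 : X * (kw w ^+ 2 / 2) <= X * (nw w - m' * s) by apply: ler_wpM2l => //; exact: ltW.
have h2 : m' * cabs a' <= m' * (X * s) by exact: ler_wpM2l.
have h3 : 2 * r ^+ 2 * X * nw w < X * kw w ^+ 2 / 32.
  have : X * (64 * r ^+ 2 * nw w) < X * kw w ^+ 2 by rewrite ltr_pM2l.
  lra.
have h4 : kw w * bb < kw w * (kw w * X / 12) by rewrite ltr_pM2l.
have h5 : 0 < X * kw w ^+ 2 by rewrite mulr_gt0 // exprn_gt0.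
lra.
Qed.
End Main2.

Unset Implicit Arguments.

Theorem lemma5p8 (R : realType) (K : set (C3 R)) :
  K `<=` @LC R -> dE_compact K ->
  exists C : R, forall (w x : C3 R) (r : R),
    K w -> @S3 R x -> 0 < r ->
    (eta_chain w (visual_ball x r) <= (C * r ^+ 2)%:E)%E.
Proof.
move=> KL _; exists 640 => w x r Kw hx r0.
have hw := KL w Kw.
rewrite /eta_chain.
set A := visual_ball x r `&` chain w.
have AX : A `<=` chain w by move=> v [].
have n0 := nw_gt0 hw; have k0 := kw_gt0 hw.
have [X0 _] := S3_x0 hx.
have r2 : 0 < r ^+ 2 by rewrite exprn_gt0.
have [small|big] := lerP (kw w ^+ 2) (64 * r ^+ 2 * nw w).
- apply: le_trans (chart_bound (c := @cdir R) (L := 4/5) hw AX (@sq_cdir R) _ _ _) _.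
  + lra.
  + lra.
  + move=> v [_ Cv]; have [l [z [l0 hz ->]]] := chain_param hw Cv.
    have [j [hj [b [hb ez]]]] := circle_chart hz.
    exists j; split => //; exists b; split => //; exists l; split => //.
    by rewrite ez.
  + rewrite lee_fin.
    have -> : 8 * (4/5) * (3 * kw w ^+ 2 / (2 * nw w)) = (48/5) * (kw w ^+ 2 / nw w).
      by field; rewrite gt_eqF.
    have : kw w ^+ 2 / nw w <= 64 * r ^+ 2 by rewrite ler_pdivrMr.
    lra.
- have [[v1 Av1]|A0] := pselect (exists v, A v).
  + case: (Av1) => [[_ bv1] Cv1].
    have [l1 [z1 [l10 hz1 ev1]]] := chain_param hw Cv1.
    rewrite ev1 in bv1.
    have hb1 := ball_cond hw hx l10 hz1 r0 bv1.
    have kb := key_bx hw hx r0 big hz1 hb1.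
    set X := cabs (c0 x) in X0 kb hb1 *.
    set bb := cabs (bx w x) in kb *.
    have bb0 : 0 < bb.
      apply: lt_le_trans kb; rewrite divr_gt0 // mulr_gt0 //.
    have kbb : 0 < kw w * bb by rewrite mulr_gt0.
    set D := 4 * r ^+ 2 * X * nw w / (kw w * bb).
    have D0 : 0 <= D by rewrite /D divr_ge0 ?ltW // !mulr_gt0.
    have D45 : D <= 4/5.
      rewrite /D ler_pdivrMr //.
      have h1 : X * (64 * r ^+ 2 * nw w) < X * kw w ^+ 2 by rewrite ltr_pM2l.
      have h2 : kw w * (kw w * X / 12) <= kw w * bb by rewrite ler_pM2l.
      lra.
    apply: le_trans (chart_bound (c := fun _ => z1) (L := D) hw AX (fun _ => hz1) D0 D45 _) _.
    * move=> v [[_ bv] Cv]; have [l [z [l0 hz ev]]] := chain_param hw Cv.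
      rewrite ev in bv; have hb := ball_cond hw hx l0 hz r0 bv.
      have cz : cabs (z - z1) <= D.
        rewrite -/X in hb.
        set K' := (kw w)%:C * bx w x in hb hb1 *.
        have t1 : cabs ((z1^* - z^*) * K') = cabs (z - z1) * (kw w * bb).
          by rewrite -rmorphB cabsM cabsJ cabsB cabs_x_C // ltW.
        have t2 : cabs ((z1^* - z^*) * K') <=
            cabs (Ax w x - z^* * K') + cabs (Ax w x - z1^* * K').
          have -> : (z1^* - z^*) * K' = (Ax w x - z^* * K') - (Ax w x - z1^* * K') by ring.
          by apply: le_trans (cabsD _ _) _; rewrite cabsN.
        rewrite /D ler_pdivlMr //; lra.
      have [b [hb' ez]] := local_chart hz1 hz cz D45.
      exists 0%N; split => //; exists b; split => //; exists l; split => //.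
      by rewrite ev ez.
    * rewrite lee_fin.
      have -> : 8 * D * (3 * kw w ^+ 2 / (2 * nw w)) = 48 * r ^+ 2 * (X * kw w / bb).
        by rewrite /D; field; rewrite !gt_eqF.
      have : X * kw w / bb <= 12 by rewrite ler_pdivrMr //; lra.
      nra.
  + apply: le_trans (chart_bound (c := @cdir R) (L := 0) hw AX (@sq_cdir R) _ _ _) _.
    * by [].
    * lra.
    * by move=> v Av; exfalso; apply: A0; exists v.
    * by rewrite lee_fin mulr0 mul0r; apply: mulr_ge0 => //; exact: ltW.
Qed.
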